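(* Let $X$ be an infinite domain, let $H$ be a countable collection of hypotheses $h:X\to\{0,1\}$, and let $\varepsilon\ge0$. Then for no $n\in\mathbb{N}$ is there an $\varepsilon$-differentially private $(1/3,1/3)$-accurate PAC learner for the point functions over $X$ using the hypothesis class $H$ with sample complexity $n$.
   Context: Point functions over $X$: $\{c_x:x\in X\}$ with $c_x(y)=1$ iff $y=x$. An $(\alpha,\beta)$-accurate PAC learner for a concept class $C$ using hypothesis class $H$ with sample complexity $n$ is an algorithm $L:(X\times\{0,1\})^n\to H$ such that for every $c\in C$ and every distribution $\mathcal{D}$ on $X$, given $(x_i,c(x_i))_{i=1}^n$ with $x_i$ i.i.d. from $\mathcal{D}$, it outputs $h\in H$ with $\Pr[\Pr_{x\sim\mathcal{D}}[h(x)\ne c(x)]\le\alpha]\ge1-\beta$. $\varepsilon$-differential privacy: for all $D,D'\in(X\times\{0,1\})^n$ differing in one row and all $T\subseteq H$, $\Pr[L(D)\in T]\le e^\varepsilon\Pr[L(D')\in T]$. *)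

(* Defs.v *)
From mathcomp Require Import all_boot all_order all_algebra.
From mathcomp Require Import all_classical all_reals all_analysis.
Set Implicit Arguments. Unset Strict Implicit. Unset Printing Implicit Defensive.
Import Order.TTheory GRing.Theory Num.Theory.
Local Open Scope classical_set_scope.
Local Open Scope ring_scope.

Section PAC.
Variables (R : realType) (X : choiceType).

Definition point_fun (x : X) : X -> bool := fun y => y == x.

Definition point_functions : set (X -> bool) := [set c | exists x, c = point_fun x].

Definition neighbors n (S S' : n.-tuple (X * bool)) :=
  exists i : 'I_n, forall j : 'I_n, j != i -> tnth S j = tnth S' j.

(* A randomized learner with hypothesis class H: on each dataset it outputs a
   probability distribution over H (H is countable, so a distribution on H is
   given by a probability mass function on H). *)
Definition learner_with_hyp (H : set (X -> bool)) n
    (L : n.-tuple (X * bool) -> (X -> bool) -> R) :=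
  forall S, (forall h, 0 <= L S h) /\ (forall h, ~ H h -> L S h = 0) /\
            (\esum_(h in H) (L S h)%:E = 1)%E.

Definition out_prob n (L : n.-tuple (X * bool) -> (X -> bool) -> R)
    (S : n.-tuple (X * bool)) (T : set (X -> bool)) : \bar R :=
  \esum_(h in T) (L S h)%:E.

Definition diff_private (eps : R) (H : set (X -> bool)) n
    (L : n.-tuple (X * bool) -> (X -> bool) -> R) :=
  forall S S', neighbors S S' -> forall T, T `<=` H ->
    (out_prob L S T <= (expR eps)%:E * out_prob L S' T)%E.

(* A (finitely supported) distribution on X: points pt i with weights w i. *)
Definition is_dist k (w : 'I_k -> R) :=
  (forall i, 0 <= w i) /\ \sum_(i < k) w i = 1.

Definition dist_err k (pt : 'I_k -> X) (w : 'I_k -> R) (c h : X -> bool) : R :=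
  \sum_(i < k) w i * (h (pt i) != c (pt i))%:R.

Definition labelled_sample n k (pt : 'I_k -> X) (c : X -> bool)
    (f : {ffun 'I_n -> 'I_k}) : n.-tuple (X * bool) :=
  [tuple (pt (f i), c (pt (f i))) | i < n].

(* Pr_{S ~ D^n, h ~ L(S)} [ error_D(h) <= alpha ] *)
Definition success_prob n (L : n.-tuple (X * bool) -> (X -> bool) -> R)
    (H : set (X -> bool)) k (pt : 'I_k -> X) (w : 'I_k -> R)
    (c : X -> bool) (alpha : R) : \bar R :=
  (\sum_(f : {ffun 'I_n -> 'I_k})
     (\prod_(i < n) w (f i))%:E *
       out_prob L (labelled_sample pt c f)
                [set h | H h /\ (dist_err pt w c h <= alpha)%R])%E.

Definition pac_learner (C H : set (X -> bool)) n
    (L : n.-tuple (X * bool) -> (X -> bool) -> R) (alpha beta : R) :=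
  learner_with_hyp H L /\
  forall c, C c -> forall k (pt : 'I_k -> X) (w : 'I_k -> R), is_dist w ->
    ((1 - beta)%:E <= success_prob L H pt w c alpha)%E.

End PAC.

(* Main.v *)
Require Import Defs.
From mathcomp Require Import all_boot all_order all_algebra.
From mathcomp Require Import all_classical all_reals all_analysis.
From mathcomp Require Import lra.
Import Order.TTheory GRing.Theory Num.Theory.
Local Open Scope classical_set_scope.
From mathcomp Require Import finmap.
Local Open Scope ring_scope.
Lemma chain (R : realType) (X : choiceType) (H : set (X -> bool)) (eps : R) n
  (L : n.-tuple (X * bool) -> (X -> bool) -> R) :
  diff_private eps H L -> forall S S0 T, T `<=` H ->
  (out_prob L S T <= ((expR eps) ^+ n)%:E * out_prob L S0 T)%E.
Proof.
move=> DP S S0 T TH.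
pose mix (j : nat) : n.-tuple (X * bool) :=
  [tuple if (i < j)%N then tnth S0 i else tnth S i | i < n].
have mix0 : mix 0%N = S.
  by apply: eq_from_tnth => i; rewrite tnth_mktuple.
have mixn : mix n = S0.
  by apply: eq_from_tnth => i; rewrite tnth_mktuple ltn_ord.
suff: forall j, (j <= n)%N ->
  (out_prob L S T <= ((expR eps) ^+ j)%:E * out_prob L (mix j) T)%E.
  by move/(_ n (leqnn n)); rewrite mixn.
elim=> [_|j IH jn]; first by rewrite expr0 mul1e mix0.
apply: (le_trans (IH (ltnW jn))).
have nb : neighbors (mix j) (mix j.+1).
  exists (Ordinal jn) => k; rewrite !tnth_mktuple => kj.
  have kj' : (k != j :> nat) by move: kj; apply: contra => /eqP e; apply/eqP/val_inj.
  by rewrite ltnS ltn_neqAle kj'.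
rewrite exprSr EFinM -muleA.
apply: lee_wpmul2l; first by rewrite lee_fin exprn_ge0 // ltW // expR_gt0.
exact: DP.
Qed.
Lemma tail (R : realType) (X : choiceType) (H : set (X -> bool))
  (P : (X -> bool) -> R) (P0 : forall h, 0 <= P h)
  (Psum : (\esum_(h in H) (P h)%:E = 1)%E) (d : R) (d0 : 0 < d) :
  exists F, finite_set F /\ F `<=` H /\
    forall T, T `<=` H -> (forall h, T h -> ~ F h) ->
      (\esum_(h in T) (P h)%:E <= d%:E)%E.
Proof.
have : ((1 - d)%:E < \esum_(h in H) (P h)%:E)%E.
  by rewrite Psum lte_fin; lra.
case/ereal_sup_gt => _ [F [finF FH] <-] Fgt.
exists F; split => //; split => // T TH TF.
have E := esumID F H (fun h => (P h)%:E) (fun i _ => P0 i : (0 <= (P i)%:E)%E).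
rewrite Psum (setIidr FH) esum_fset // in E; last by move=> i _; rewrite lee_fin.
rewrite fsumEFin // in E Fgt.
have e2 : (\esum_(h in T) (P h)%:E <= \esum_(h in H `&` ~` F) (P h)%:E)%E.
  rewrite esum_mkcond [X in (_ <= X)%E]esum_mkcond; apply: le_esum => h _.
  case: ifPn => hT; last by case: ifPn => _; rewrite ?lee_fin.
  move/set_mem: hT => hT; rewrite ifT //; apply/mem_set; split; [exact: TH | exact: TF].
apply: (le_trans e2); move: E; case: (\esum_(h in H `&` ~` F) (P h)%:E) => [r||] //= E.
move: E => /eqP; rewrite -EFinD eqe => /eqP E.
rewrite lte_fin in Fgt; rewrite lee_fin; lra.
Qed.
Lemma pigeon (X : choiceType) (F : set (X -> bool)) :
  infinite_set [set: X] -> finite_set F ->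
  exists x y : X, x != y /\ forall h, F h -> h x = h y.
Proof.
move=> Xinf finF.
pose G := fset_set F.
have [B _ cB] := infinite_set_fset (2 ^ #|` G|).+1 Xinf.
apply: contrapT => nex.
pose g (b : B) : {ffun G -> bool} := [ffun h => val h (val b)].
have ginj : injective g.
  move=> a b gab; apply/val_inj/eqP; apply: contrapT => ab.
  apply: nex; exists (val a), (val b); split; first by apply/negP.
  move=> h Fh; have hG : h \in G by rewrite /G in_fset_set //; apply/mem_set.
  by have := congr1 (fun f : {ffun G -> bool} => f (FSetSub hG)) gab; rewrite !ffunE.
have := @leq_card _ _ g ginj; rewrite card_ffun card_bool.
have -> : #|{: B}| = #|` B| by rewrite cardfE.
have -> : #|{: G}| = #|` G| by rewrite cardfE.
by rewrite leqNgt cB.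
Qed.

Theorem theorem7p2 (R : realType) (X : choiceType)
  (Xinf : infinite_set [set: X])
  (H : set (X -> bool)) (Hcount : countable H)
  (eps : R) (eps_ge0 : 0 <= eps) :
  forall (n : nat) (L : n.-tuple (X * bool) -> (X -> bool) -> R),
    ~ (diff_private eps H L /\
       pac_learner (@point_functions X) H L (1 / 3) (1 / 3)).
Proof.
move=> n L [DP [LH PAC]].
have [x0 _] := infinite_setN0 Xinf.
pose S0 : n.-tuple (X * bool) := [tuple (x0, true) | _ < n].
pose c := expR eps ^+ n.
have c0 : 0 < c by rewrite exprn_gt0 // expR_gt0.
pose d := (3 * c)^-1.
have d0 : 0 < d by rewrite invr_gt0 mulr_gt0.
have [P0 [_ Psum]] := LH S0.
have [F [finF [FH Ftail]]] := @tail R X H (L S0) P0 Psum d d0.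
have [x [y [xy Fxy]]] := @pigeon X F Xinf finF.
pose pt : 'I_2 -> X := fun i => if i == ord0 then x else y.
pose w : 'I_2 -> R := fun _ => 1 / 2.
have wd : is_dist w.
  split; first by move=> i; rewrite /w; lra.
  by rewrite big_ord_recr big_ord1 /w /= -splitr.
have := PAC (point_fun x) (ex_intro _ x erefl) 2 pt w wd.
have TH : [set h | H h /\ dist_err pt w (point_fun x) h <= 1 / 3] `<=` H.
  by move=> h [].
have TF : forall h, [set h | H h /\ dist_err pt w (point_fun x) h <= 1 / 3] h -> ~ F h.
  move=> h [_ herr] Fh; have := Fxy h Fh.
  move: herr; rewrite /dist_err big_ord_recr big_ord1 /pt /w /= /point_fun eqxx.
  have -> : (y == x) = false by apply/negbTE; rewrite eq_sym.
  by case: (h x); case: (h y) => //= le _; move: le; rewrite ?mulr0 ?mulr1 ?addr0 ?add0r; lra.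
have out0 := Ftail _ TH TF.
move=> succ.
have : (success_prob L H pt w (point_fun x) (1 / 3) <= (c * d)%:E)%E.
  rewrite /success_prob.
  apply: (@le_trans _ _ (\sum_(f : {ffun 'I_n -> 'I_2}) ((\prod_(i < n) w (f i)) * (c * d))%:E)%E).
    apply: lee_sum => f _; rewrite EFinM; apply: lee_wpmul2l.
      by rewrite lee_fin; apply: prodr_ge0 => i _; rewrite /w; lra.
    apply: le_trans (@chain R X H eps n L DP _ S0 _ TH) _; rewrite EFinM; apply: lee_wpmul2l => //.
  rewrite sumEFin lee_fin -mulr_suml -(bigA_distr_bigA (fun (i : 'I_n) (j : 'I_2) => w j)).
  rewrite big1 ?mul1r // => i _; by rewrite big_ord_recr big_ord1 /w /= -splitr.
have cd : c * d = 1 / 3.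
  by rewrite /d invfM mulrCA mulfV ?gt_eqF // mulr1 div1r.
move=> le; have := le_trans succ le; rewrite lee_fin => h1.
have h2 : c * d <= 1 / 3 by rewrite cd.
have := le_trans h1 h2; lra.
Qed.
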